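(* Let $\nu\in\mathbb{N}$ and $p\in(0,1)$, and let $G_\nu$ and $g_\nu$ be the c.d.f. and p.d.f. of Student's $t$-distribution with $\nu$ degrees of freedom. For $h\in\mathbb{R}$ and $k\in\mathbb{N}$ let $f_1(h,k):=\int_{-\infty}^{\infty}G_\nu^k(t+h)g_\nu(t)\,dt$. Then there exists $K>0$ such that for every $k>K$ the equation $f_1(h,k)=p$ has a unique positive solution $h$. *)

(* Defs.v *)
From Stdlib Require Import Reals.
From Coquelicot Require Import Coquelicot.
Open Scope R_scope.

Definition t_kernel (nu : nat) (t : R) : R :=
  Rpower (1 + t ^ 2 / INR nu) (- (INR nu + 1) / 2).

(* Normalizing constant  int_{-oo}^{+oo} t_kernel  (equals
   sqrt(nu pi) Gamma(nu/2) / Gamma((nu+1)/2)). *)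
Definition t_const (nu : nat) : R :=
  RInt_gen (t_kernel nu) (Rbar_locally m_infty) (Rbar_locally p_infty).

Definition t_pdf (nu : nat) (t : R) : R := t_kernel nu t / t_const nu.

Definition t_cdf (nu : nat) (x : R) : R :=
  RInt_gen (t_pdf nu) (Rbar_locally m_infty) (at_point x).

Definition f1 (nu : nat) (h : R) (k : nat) : R :=
  RInt_gen (fun t => (t_cdf nu (t + h)) ^ k * t_pdf nu t)
    (Rbar_locally m_infty) (Rbar_locally p_infty).

(* Main.v *)
Require Import Defs.
From Stdlib Require Import Reals.
From Coquelicot Require Import Coquelicot.
Open Scope R_scope.
From Stdlib Require Import Lra Lia.

Definition limp (f : R -> R) (l : R) :=
  forall eps, 0 < eps -> exists M, forall x, M < x -> Rabs (f x - l) < eps.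
Definition limm (f : R -> R) (l : R) :=
  forall eps, 0 < eps -> exists M, forall x, x < M -> Rabs (f x - l) < eps.

Lemma RInt_diff (f : R -> R) a b :
  (forall a b, ex_RInt f a b) -> RInt f a b = RInt f 0 b - RInt f 0 a.
Proof.
  intros H. rewrite <- (RInt_Chasles f a 0 b) by auto.
  rewrite <- (opp_RInt_swap f 0 a) by auto.
  unfold plus, opp; simpl. ring.
Qed.

Lemma gen_prim (f : R -> R) (Fb : (R -> Prop) -> Prop) (FFb : Filter Fb) la lb :
  (forall a b, ex_RInt f a b) -> limm (fun x => RInt f 0 x) la ->
  (forall eps, 0 < eps -> Fb (fun b => Rabs (RInt f 0 b - lb) < eps)) ->
  is_RInt_gen f (Rbar_locally m_infty) Fb (lb - la).
Proof.
  intros Hex Hm Hb P [eps HP].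
  unfold filtermapi.
  destruct (Hm (eps/2)) as [M HM]. { destruct eps; simpl; lra. }
  apply Filter_prod with (fun a => Rabs (RInt f 0 a - la) < eps/2)
     (fun b => Rabs (RInt f 0 b - lb) < eps/2).
  - exists M; auto.
  - apply Hb. destruct eps; simpl; lra.
  - intros a b Ha Hb'. exists (RInt f a b). split.
    + apply (@RInt_correct R_CompleteNormedModule), Hex.
    + apply HP. change (Rabs (RInt f a b - (lb - la)) < eps).
      rewrite (RInt_diff f a b Hex).
      assert (Habs: forall u v : R, Rabs (u - v) <= Rabs u + Rabs v).
      { intros. unfold Rminus. eapply Rle_trans. apply Rabs_triang. rewrite Rabs_Ropp. lra. }
      replace (RInt f 0 b - RInt f 0 a - (lb - la)) with
        ((RInt f 0 b - lb) - (RInt f 0 a - la)) by ring.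
      eapply Rle_lt_trans. apply Habs. lra.
Qed.

Lemma limp_unique f a b : limp f a -> limp f b -> a = b.
Proof.
  intros Ha Hb. destruct (Req_dec a b) as [|Hn]; auto. exfalso.
  assert (He : 0 < Rabs (a - b) / 2) by (assert (a - b <> 0) by lra; pose proof (Rabs_pos_lt _ H); lra).
  destruct (Ha _ He) as [M1 H1]. destruct (Hb _ He) as [M2 H2].
  set (x := Rmax M1 M2 + 1).
  assert (M1 < x) by (unfold x; pose proof (Rmax_l M1 M2); lra).
  assert (M2 < x) by (unfold x; pose proof (Rmax_r M1 M2); lra).
  specialize (H1 x H). specialize (H2 x H0).
  assert (Rabs (a - b) <= Rabs (f x - b) + Rabs (f x - a)).
  { replace (a - b) with ((f x - b) - (f x - a)) by ring.
    unfold Rminus at 1. eapply Rle_trans. apply Rabs_triang. rewrite Rabs_Ropp. lra. }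
  lra.
Qed.

Lemma limp_le f g a b : (exists M, forall x, M < x -> f x <= g x) -> limp f a -> limp g b -> a <= b.
Proof.
  intros [M HM] Ha Hb. apply Rnot_lt_le. intros Hlt.
  assert (He : 0 < (a - b) / 2) by lra.
  destruct (Ha _ He) as [M1 H1]. destruct (Hb _ He) as [M2 H2].
  set (x := Rmax M (Rmax M1 M2) + 1).
  pose proof (Rmax_l M (Rmax M1 M2)). pose proof (Rmax_r M (Rmax M1 M2)).
  pose proof (Rmax_l M1 M2). pose proof (Rmax_r M1 M2).
  specialize (HM x ltac:(unfold x; lra)). specialize (H1 x ltac:(unfold x; lra)).
  specialize (H2 x ltac:(unfold x; lra)).
  apply Rabs_def2 in H1. apply Rabs_def2 in H2. lra.
Qed.

Lemma limp_const c : limp (fun _ => c) c.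
Proof. intros eps He. exists 0. intros. rewrite Rminus_eq_0, Rabs_R0. exact He. Qed.

Lemma limp_ext f g l : (forall x, f x = g x) -> limp f l -> limp g l.
Proof. intros H Hf eps He. destruct (Hf eps He) as [M HM]. exists M. intros. rewrite <- H. auto. Qed.

Lemma limp_scal f l c : limp f l -> limp (fun x => c * f x) (c * l).
Proof.
  intros Hf eps He.
  destruct (Hf (eps / (Rabs c + 1))) as [M HM].
  { apply Rdiv_lt_0_compat. lra. pose proof (Rabs_pos c); lra. }
  exists M. intros x Hx. specialize (HM x Hx).
  replace (c * f x - c * l) with (c * (f x - l)) by ring. rewrite Rabs_mult.
  pose proof (Rabs_pos c). pose proof (Rabs_pos (f x - l)).
  apply Rle_lt_trans with ((Rabs c + 1) * Rabs (f x - l)). nra.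
  replace eps with ((Rabs c + 1) * (eps / (Rabs c + 1))) by (field; lra).
  apply Rmult_lt_compat_l; lra.
Qed.

Lemma limp_plus f g a b : limp f a -> limp g b -> limp (fun x => f x + g x) (a + b).
Proof.
  intros Ha Hb eps He. destruct (Ha (eps/2)) as [M1 H1]. lra. destruct (Hb (eps/2)) as [M2 H2]. lra.
  exists (Rmax M1 M2). intros x Hx. pose proof (Rmax_l M1 M2). pose proof (Rmax_r M1 M2).
  specialize (H1 x ltac:(lra)). specialize (H2 x ltac:(lra)).
  apply Rabs_def2 in H1. apply Rabs_def2 in H2. apply Rabs_def1; lra.
Qed.

Lemma limp_minus f g a b : limp f a -> limp g b -> limp (fun x => f x - g x) (a - b).
Proof.
  intros Ha Hb. apply (limp_ext (fun x => f x + (-1) * g x)). intros; ring.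
  replace (a - b) with (a + (-1) * b) by ring. apply limp_plus; auto. apply limp_scal; auto.
Qed.

Lemma limm_neg f l : limm f l -> limp (fun x => f (- x)) l.
Proof. intros H eps He. destruct (H eps He) as [M HM]. exists (- M). intros. apply HM. lra. Qed.

Lemma pow_lip a b n : 0 <= a <= 1 -> 0 <= b <= 1 -> Rabs (a ^ n - b ^ n) <= INR n * Rabs (a - b).
Proof.
  intros Ha Hb. induction n.
  - simpl. rewrite Rminus_eq_0, Rabs_R0. lra.
  - rewrite S_INR. simpl.
    replace (a * a ^ n - b * b ^ n) with (a * (a ^ n - b ^ n) + b ^ n * (a - b)) by ring.
    eapply Rle_trans. apply Rabs_triang. rewrite !Rabs_mult.
    assert (Rabs a <= 1) by (rewrite Rabs_pos_eq; lra).
    assert (Rabs (b ^ n) <= 1).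
    { rewrite Rabs_pos_eq by (apply pow_le; lra). replace 1 with (1 ^ n) by apply pow1. apply pow_incr. lra. }
    pose proof (Rabs_pos (a ^ n - b ^ n)). pose proof (Rabs_pos (a - b)).
    pose proof (Rabs_pos a). pose proof (Rabs_pos (b ^ n)).
    nra.
Qed.

Lemma pow_lt_mono a b n : (1 <= n)%nat -> 0 <= a < b -> a ^ n < b ^ n.
Proof.
  intros Hn Hab. destruct n. lia. simpl.
  assert (a ^ n <= b ^ n) by (apply pow_incr; lra).
  assert (0 < b ^ n) by (apply pow_lt; lra).
  pose proof (pow_le a n ltac:(lra)). nra.
Qed.

Lemma limp_pow01 f l n : (forall x, 0 <= f x <= 1) -> 0 <= l <= 1 -> limp f l ->
  limp (fun x => f x ^ n) (l ^ n).
Proof.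
  intros Hf Hl H eps He.
  destruct (H (eps / (INR n + 1))) as [M HM].
  { apply Rdiv_lt_0_compat. lra. pose proof (pos_INR n); lra. }
  exists M. intros x Hx. specialize (HM x Hx).
  eapply Rle_lt_trans. apply pow_lip; auto.
  pose proof (pos_INR n). pose proof (Rabs_pos (f x - l)).
  apply Rle_lt_trans with ((INR n + 1) * Rabs (f x - l)). nra.
  replace eps with ((INR n + 1) * (eps / (INR n + 1))) by (field; lra).
  apply Rmult_lt_compat_l; lra.
Qed.
Lemma mono_limp (f : R -> R) B :
  (forall x y, x <= y -> f x <= f y) -> (forall x, f x <= B) ->
  exists l, limp f l /\ forall x, f x <= l.
Proof.
  intros Hm HB.
  destruct (completeness (fun y => exists x, y = f x)) as [m [Hub Hl]].
  - exists B. intros y [x ->]. apply HB.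
  - exists (f 0). exists 0. reflexivity.
  - exists m. split.
    + intros eps Heps.
      destruct (Classical_Prop.classic (exists x0, m - eps < f x0)) as [[x0 Hx0]|Hn].
      * exists x0. intros x Hx.
        assert (f x0 <= f x) by (apply Hm; lra).
        assert (f x <= m) by (apply Hub; exists x; reflexivity).
        apply Rabs_def1; lra.
      * exfalso. assert (m <= m - eps); [|lra].
        apply Hl. intros y [x ->]. apply Rnot_lt_le. intros H. apply Hn. exists x. exact H.
    + intros x. apply Hub. exists x. reflexivity.
Qed.

Lemma mono_limm (f : R -> R) B :
  (forall x y, x <= y -> f x <= f y) -> (forall x, B <= f x) ->
  exists l, limm f l /\ forall x, l <= f x.
Proof.
  intros Hm HB.
  destruct (mono_limp (fun x => - f (- x)) (- B)) as [l [Hl Hle]].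
  - intros x y H. apply Ropp_le_contravar, Hm. lra.
  - intros x. specialize (HB (- x)). lra.
  - exists (- l). split.
    + intros eps Heps. destruct (Hl eps Heps) as [M HM]. exists (- M).
      intros x Hx. specialize (HM (- x) ltac:(lra)).
      rewrite Ropp_involutive in HM.
      replace (f x - - l) with (- (- f x - l)) by ring. rewrite Rabs_Ropp. exact HM.
    + intros x. specialize (Hle (- x)). rewrite Ropp_involutive in Hle. lra.
Qed.

Section Impr.
Variable u : R -> R.
Hypothesis Hc : forall x, continuous u x.
Hypothesis Hp : forall x, 0 <= u x.
Variable B : R.
Hypothesis Hb : forall x, Rabs (RInt u 0 x) <= B.

Lemma ex_u a b : ex_RInt u a b.
Proof. apply (@ex_RInt_continuous R_CompleteNormedModule). intros; apply Hc. Qed.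

Lemma RInt_u_ge0 a b : a <= b -> 0 <= RInt u a b.
Proof. intros H. apply RInt_ge_0; auto. apply ex_u. Qed.

Lemma prim_incr x y : x <= y -> RInt u 0 x <= RInt u 0 y.
Proof.
  intros H. pose proof (RInt_diff u x y ex_u). pose proof (RInt_u_ge0 x y H). lra.
Qed.

Lemma impr : exists lm lp,
  limm (fun x => RInt u 0 x) lm /\ limp (fun x => RInt u 0 x) lp /\
  (forall x, lm <= RInt u 0 x <= lp) /\
  RInt_gen u (Rbar_locally m_infty) (Rbar_locally p_infty) = lp - lm /\
  limp (fun x => RInt u (- x) x) (lp - lm) /\
  (forall x, RInt_gen u (Rbar_locally m_infty) (at_point x) = RInt u 0 x - lm).
Proof.
  destruct (mono_limp (fun x => RInt u 0 x) B) as [lp [Hlp Hlep]].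
  { exact prim_incr. } { intros x. specialize (Hb x). apply Rabs_le_between in Hb. lra. }
  destruct (mono_limm (fun x => RInt u 0 x) (- B)) as [lm [Hlm Hlem]].
  { exact prim_incr. } { intros x. specialize (Hb x). apply Rabs_le_between in Hb. lra. }
  exists lm, lp. split; [auto|]. split; [auto|]. split.
  { intros x; split; [apply Hlem|apply Hlep]. }
  split; [|split].
  - apply (is_RInt_gen_unique (V:=R_CompleteNormedModule)).
    apply gen_prim. exact _. exact ex_u. exact Hlm.
    intros eps Heps. destruct (Hlp eps Heps) as [M HM]. exists M. exact HM.
  - intros eps Heps. destruct (Hlp (eps/2)) as [M1 H1]. lra.
    destruct (Hlm (eps/2)) as [M2 H2]. lra.
    exists (Rmax M1 (- M2)). intros x Hx.
    assert (M1 < x) by (eapply Rle_lt_trans; [apply Rmax_l|exact Hx]).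
    assert (- M2 < x) by (eapply Rle_lt_trans; [apply Rmax_r|exact Hx]).
    specialize (H1 x ltac:(lra)). specialize (H2 (- x) ltac:(lra)).
    rewrite (RInt_diff u (- x) x ex_u).
    apply Rabs_def2 in H1. apply Rabs_def2 in H2. apply Rabs_def1; lra.
  - intros x. apply (is_RInt_gen_unique (V:=R_CompleteNormedModule)).
    apply gen_prim. exact _. exact ex_u. exact Hlm.
    intros eps Heps. unfold at_point. rewrite Rminus_eq_0, Rabs_R0. exact Heps.
Qed.
End Impr.

Lemma exp_mono_le x y : x <= y -> exp x <= exp y.
Proof. intros [H|H]. left; apply exp_increasing; exact H. subst; lra. Qed.

Lemma exd_cont (f : R -> R) x : ex_derive f x -> continuous f x.
Proof. intros H. apply (@ex_derive_continuous R_AbsRing R_NormedModule). exact H. Qed.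

Section Kernel.
Variable nu : nat.
Hypothesis Hnu : (1 <= nu)%nat.

Lemma n_ge1 : 1 <= INR nu.
Proof. change 1 with (INR 1). apply le_INR. exact Hnu. Qed.

Lemma base_ge1 t : 1 <= 1 + t ^ 2 / INR nu.
Proof.
  pose proof n_ge1. assert (0 <= t ^ 2 / INR nu).
  { unfold Rdiv. apply Rmult_le_pos. apply pow2_ge_0. left; apply Rinv_0_lt_compat; lra. }
  lra.
Qed.

Lemma ker_cont t : continuous (t_kernel nu) t.
Proof.
  apply exd_cont. unfold t_kernel, Rpower.
  auto_derive. pose proof (base_ge1 t). simpl in H. lra.
Qed.

Lemma ker_pos t : 0 < t_kernel nu t.
Proof. unfold t_kernel, Rpower. apply exp_pos. Qed.

Lemma ker_le1 t : t_kernel nu t <= 1.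
Proof.
  unfold t_kernel, Rpower. apply Rle_trans with (exp 0); [|rewrite exp_0; lra]. apply exp_mono_le.
  pose proof n_ge1. pose proof (base_ge1 t).
  assert (0 <= ln (1 + t ^ 2 / INR nu)).
  { rewrite <- ln_1. apply ln_le; lra. }
  set (L := ln (1 + t ^ 2 / INR nu)) in *.
  assert (0 <= (INR nu + 1) / 2 * L) by (apply Rmult_le_pos; lra).
  replace (- (INR nu + 1) / 2 * L) with (- ((INR nu + 1) / 2 * L)) by field. lra.
Qed.

Lemma ker_le t : t_kernel nu t <= INR nu * / (1 + t ^ 2).
Proof.
  pose proof n_ge1. pose proof (base_ge1 t).
  apply Rle_trans with (/ (1 + t ^ 2 / INR nu)).
  - unfold t_kernel, Rpower. rewrite <- (exp_ln (1 + t ^ 2 / INR nu)) at 2 by lra.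
    rewrite <- exp_Ropp. apply exp_mono_le.
    assert (0 <= ln (1 + t ^ 2 / INR nu)).
    { rewrite <- ln_1. apply ln_le; lra. }
    set (L := ln (1 + t ^ 2 / INR nu)) in *.
    assert (0 <= ((INR nu + 1) / 2 - 1) * L) by (apply Rmult_le_pos; lra).
    replace (- (INR nu + 1) / 2 * L) with (- L - ((INR nu + 1) / 2 - 1) * L) by field. lra.
  - assert (H2 : 0 <= t ^ 2) by apply pow2_ge_0.
    replace (/ (1 + t ^ 2 / INR nu)) with (INR nu * / (INR nu + t ^ 2)) by (field; lra).
    apply Rmult_le_compat_l. lra. apply Rinv_le_contravar; lra.
Qed.

Lemma atan_int a b : RInt (fun t => INR nu * / (1 + t ^ 2)) a b = INR nu * atan b - INR nu * atan a.
Proof.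
  apply (is_RInt_unique (V:=R_CompleteNormedModule)).
  apply (is_RInt_derive (V:=R_CompleteNormedModule) (fun t => INR nu * atan t)).
  - intros x _. apply is_derive_scal. apply is_derive_Reals. apply derivable_pt_lim_atan.
  - intros x _. apply exd_cont. auto_derive.
    pose proof (pow2_ge_0 x). simpl in H. lra.
Qed.

Lemma ker_int_le a b : a <= b -> RInt (t_kernel nu) a b <= INR nu * atan b - INR nu * atan a.
Proof.
  intros Hab. rewrite <- atan_int. apply RInt_le. exact Hab.
  apply (@ex_RInt_continuous R_CompleteNormedModule). intros; apply ker_cont.
  apply (@ex_RInt_continuous R_CompleteNormedModule). intros; apply exd_cont. auto_derive.
    pose proof (pow2_ge_0 z). simpl in H0. lra.
  intros; apply ker_le.
Qed.

Lemma ker_prim_bound x : Rabs (RInt (t_kernel nu) 0 x) <= INR nu * PI.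
Proof.
  pose proof n_ge1.
  assert (Hex : forall a b, ex_RInt (t_kernel nu) a b).
  { intros. apply (@ex_RInt_continuous R_CompleteNormedModule). intros; apply ker_cont. }
  assert (Hpos : forall a b, a <= b -> 0 <= RInt (t_kernel nu) a b).
  { intros. apply RInt_ge_0; auto. intros; left; apply ker_pos. }
  pose proof (atan_bound x). pose proof (atan_bound 0).
  destruct (Rle_or_lt 0 x).
  - pose proof (ker_int_le 0 x H2). pose proof (Hpos 0 x H2).
    apply Rabs_le. split; nra.
  - pose proof (ker_int_le x 0 ltac:(lra)). pose proof (Hpos x 0 ltac:(lra)).
    rewrite <- (opp_RInt_swap (t_kernel nu)) by auto. unfold opp; simpl.
    apply Rabs_le. split; nra.
Qed.
End Kernel.

Lemma is_derive_val (f : R -> R) x l l' : is_derive f x l -> l = l' -> is_derive f x l'.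
Proof. intros H ->. exact H. Qed.

Section Dist.
Variable nu : nat.
Hypothesis Hnu : (1 <= nu)%nat.

Lemma tconst_facts : 0 < t_const nu /\ limp (fun x => RInt (t_kernel nu) (-x) x) (t_const nu).
Proof.
  destruct (impr (t_kernel nu) (ker_cont nu Hnu) (fun x => Rlt_le _ _ (ker_pos nu x)) _
     (ker_prim_bound nu Hnu)) as (lm & lp & Hm & Hp & Hb & Hg & Hs & Ha).
  unfold t_const; rewrite Hg. split; auto.
  pose proof (Hb 1). pose proof (Hb (-1)).
  assert (0 < RInt (t_kernel nu) (-1) 1).
  { apply RInt_gt_0. lra. intros; apply ker_pos. intros; apply ker_cont; auto. }
  rewrite (RInt_diff _ _ _ (ex_u _ (ker_cont nu Hnu))) in H1. lra.
Qed.

Lemma C_pos : 0 < t_const nu.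
Proof. apply tconst_facts. Qed.

Lemma pdf_cont t : continuous (t_pdf nu) t.
Proof.
  unfold t_pdf, Rdiv.
  apply (continuous_mult (K:=R_AbsRing) (t_kernel nu) (fun _ => / t_const nu)).
  apply ker_cont; auto. apply continuous_const.
Qed.

Lemma pdf_pos t : 0 < t_pdf nu t.
Proof. unfold t_pdf. apply Rdiv_lt_0_compat. apply ker_pos. apply C_pos. Qed.

Lemma pdf_le t : t_pdf nu t <= / t_const nu.
Proof.
  unfold t_pdf, Rdiv. pose proof (ker_le1 nu Hnu t). pose proof (ker_pos nu t).
  pose proof (Rinv_0_lt_compat _ C_pos). nra.
Qed.

Lemma ex_pdf a b : ex_RInt (t_pdf nu) a b.
Proof. apply (ex_u _ pdf_cont). Qed.

Lemma RInt_pdf a b : RInt (t_pdf nu) a b = / t_const nu * RInt (t_kernel nu) a b.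
Proof.
  rewrite (RInt_ext (V:=R_CompleteNormedModule) (t_pdf nu) (fun t => scal (/ t_const nu) (t_kernel nu t))).
  - rewrite (RInt_scal (V:=R_CompleteNormedModule)). reflexivity. apply (ex_u _ (ker_cont nu Hnu)).
  - intros. unfold t_pdf, scal; simpl. unfold mult; simpl. unfold Rdiv. ring.
Qed.

Lemma pdf_prim_bound x : Rabs (RInt (t_pdf nu) 0 x) <= / t_const nu * (INR nu * PI).
Proof.
  rewrite RInt_pdf, Rabs_mult. pose proof (Rinv_0_lt_compat _ C_pos).
  rewrite (Rabs_pos_eq (/ t_const nu)) by lra.
  apply Rmult_le_compat_l. lra. apply ker_prim_bound; auto.
Qed.

Lemma cdf_spec : exists gm,
  (forall x, t_cdf nu x = RInt (t_pdf nu) 0 x - gm) /\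
  limm (fun x => RInt (t_pdf nu) 0 x) gm /\ limp (fun x => RInt (t_pdf nu) 0 x) (gm + 1) /\
  (forall x, gm <= RInt (t_pdf nu) 0 x <= gm + 1).
Proof.
  destruct (impr (t_pdf nu) pdf_cont (fun x => Rlt_le _ _ (pdf_pos x)) _ pdf_prim_bound)
    as (lm & lp & Hm & Hp & Hb & Hg & Hs & Ha).
  assert (E : lp - lm = 1).
  { apply (limp_unique (fun x => RInt (t_pdf nu) (- x) x)); auto.
    apply (limp_ext (fun x => / t_const nu * RInt (t_kernel nu) (- x) x)).
    intros; rewrite RInt_pdf; auto.
    replace 1 with (/ t_const nu * t_const nu) by (field; pose proof C_pos; lra).
    apply limp_scal. apply tconst_facts. }
  exists lm. split; [|split; [|split]].
  - intros x. unfold t_cdf. apply Ha.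
  - auto.
  - replace (lm + 1) with lp by lra. auto.
  - intros x. specialize (Hb x). lra.
Qed.

Lemma cdf_diff a b : t_cdf nu b - t_cdf nu a = RInt (t_pdf nu) a b.
Proof.
  destruct cdf_spec as (gm & H & _). rewrite !H. rewrite (RInt_diff _ a b ex_pdf). ring.
Qed.

Lemma cdf_01 x : 0 <= t_cdf nu x <= 1.
Proof. destruct cdf_spec as (gm & H & _ & _ & Hb). rewrite H. specialize (Hb x). lra. Qed.

Lemma cdf_lt a b : a < b -> t_cdf nu a < t_cdf nu b.
Proof.
  intros Hab. assert (0 < RInt (t_pdf nu) a b).
  { apply RInt_gt_0; auto. intros; apply pdf_pos. intros; apply pdf_cont. }
  pose proof (cdf_diff a b). lra.
Qed.

Lemma cdf_le a b : a <= b -> t_cdf nu a <= t_cdf nu b.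
Proof. intros [H|H]. left; apply cdf_lt; auto. subst; lra. Qed.

Lemma cdf_lip a b : Rabs (t_cdf nu a - t_cdf nu b) <= / t_const nu * Rabs (a - b).
Proof.
  assert (Hg : forall a b, a <= b -> Rabs (t_cdf nu b - t_cdf nu a) <= (b - a) * / t_const nu).
  { intros a0 b0 H. rewrite cdf_diff. apply abs_RInt_le_const; auto. apply ex_pdf.
    intros. rewrite Rabs_pos_eq. apply pdf_le. left; apply pdf_pos. }
  destruct (Rle_or_lt a b).
  - rewrite <- Rabs_Ropp, Ropp_minus_distr. rewrite <- (Rabs_Ropp (a - b)), Ropp_minus_distr.
    rewrite (Rabs_pos_eq (b - a)) by lra. rewrite Rmult_comm. apply Hg; auto.
  - rewrite (Rabs_pos_eq (a - b)) by lra. rewrite Rmult_comm. apply Hg; lra.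
Qed.

Lemma cdf_limp : limp (t_cdf nu) 1.
Proof.
  destruct cdf_spec as (gm & H & _ & Hp & _).
  apply (limp_ext (fun x => RInt (t_pdf nu) 0 x - gm)). intros; rewrite H; auto.
  replace 1 with (gm + 1 - gm) by ring. apply limp_minus; auto. apply limp_const.
Qed.

Lemma cdf_limm : limm (t_cdf nu) 0.
Proof.
  destruct cdf_spec as (gm & H & Hm & _ & _).
  intros eps He. destruct (Hm eps He) as [M HM]. exists M. intros x Hx.
  rewrite H. replace (RInt (t_pdf nu) 0 x - gm - 0) with (RInt (t_pdf nu) 0 x - gm) by ring. auto.
Qed.

Lemma cdf_deriv x : is_derive (t_cdf nu) x (t_pdf nu x).
Proof.
  destruct cdf_spec as (gm & H & _).
  assert (D : is_derive (fun y => RInt (t_pdf nu) 0 y) x (t_pdf nu x)).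
  { apply is_derive_RInt with 0. apply filter_forall. intros. apply (@RInt_correct R_CompleteNormedModule). apply ex_pdf.
    apply pdf_cont. }
  apply (is_derive_ext (fun y => minus (RInt (t_pdf nu) 0 y) gm)).
  { intros; rewrite H; reflexivity. }
  pose proof (is_derive_minus _ _ x _ _ D (is_derive_const (K:=R_AbsRing) (V:=R_NormedModule) gm x)) as HD.
  eapply is_derive_val. exact HD.
  unfold minus, zero, plus, opp; simpl. ring.
Qed.
End Dist.

Lemma cmp_bound (u v : R -> R) x :
  (forall t, continuous u t) -> (forall t, continuous v t) ->
  (forall t, 0 <= u t <= v t) -> Rabs (RInt u 0 x) <= Rabs (RInt v 0 x).
Proof.
  intros Hu Hv H.
  assert (Hle : forall a b, a <= b -> 0 <= RInt u a b <= RInt v a b).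
  { intros a b Hab. split. apply RInt_ge_0; auto. apply ex_u; auto. intros; apply H.
    apply RInt_le; auto. apply ex_u; auto. apply ex_u; auto. intros; apply H. }
  destruct (Rle_or_lt 0 x).
  - specialize (Hle 0 x H0). rewrite !Rabs_pos_eq; lra.
  - specialize (Hle x 0 ltac:(lra)).
    rewrite <- (opp_RInt_swap u) by (apply ex_u; auto).
    rewrite <- (opp_RInt_swap v) by (apply ex_u; auto).
    unfold opp; simpl. rewrite !Rabs_Ropp. rewrite !Rabs_pos_eq; lra.
Qed.

Lemma cont_minus (f g : R -> R) x : continuous f x -> continuous g x -> continuous (fun t => f t - g t) x.
Proof. intros. apply (continuous_minus (K:=R_AbsRing) (V:=R_NormedModule) f g); auto. Qed.

Lemma cont_mult (f g : R -> R) x : continuous f x -> continuous g x -> continuous (fun t => f t * g t) x.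
Proof. intros. apply (continuous_mult (K:=R_AbsRing) f g); auto. Qed.

Lemma eqR (a b : R) : a = b -> a = b.
Proof. auto. Qed.

Section F.
Variable nu : nat.
Hypothesis Hnu : (1 <= nu)%nat.
Variable k : nat.
Hypothesis Hk : (1 <= k)%nat.

Definition uu h := fun t => t_cdf nu (t + h) ^ k * t_pdf nu t.

Lemma inner_deriv h x : is_derive (fun t => t_cdf nu (t + h)) x (t_pdf nu (x + h)).
Proof.
  assert (Hi : is_derive (fun t : R => t + h) x 1).
  { pose proof (is_derive_plus (K:=R_AbsRing) (V:=R_NormedModule) (fun t => t) (fun _ => h) x _ _
      (is_derive_id x) (is_derive_const h x)) as HD.
    eapply is_derive_val. exact HD. unfold plus, one, zero; simpl. ring. }
  pose proof (is_derive_comp (K:=R_AbsRing) (V:=R_NormedModule) (t_cdf nu) (fun t => t + h) x _ _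
     (cdf_deriv nu Hnu (x + h)) Hi) as HD.
  eapply is_derive_val. exact HD. unfold scal; simpl. unfold mult; simpl. ring.
Qed.

Lemma uu_cont h t : continuous (uu h) t.
Proof.
  unfold uu. apply cont_mult.
  - apply exd_cont. eexists. apply is_derive_pow. apply inner_deriv.
  - apply pdf_cont; auto.
Qed.

Lemma uu_bounds h t : 0 <= uu h t <= t_pdf nu t.
Proof.
  unfold uu. pose proof (cdf_01 nu Hnu (t + h)). pose proof (pdf_pos nu Hnu t).
  assert (0 <= t_cdf nu (t + h) ^ k <= 1).
  { split. apply pow_le; lra. replace 1 with (1 ^ k) by apply pow1. apply pow_incr. lra. }
  split. apply Rmult_le_pos; lra.
  rewrite <- (Rmult_1_l (t_pdf nu t)) at 2. apply Rmult_le_compat_r; lra.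
Qed.

Lemma FL h : limp (fun x => RInt (uu h) (- x) x) (f1 nu h k).
Proof.
  assert (Hb : forall x, Rabs (RInt (uu h) 0 x) <= / t_const nu * (INR nu * PI)).
  { intros x. eapply Rle_trans. apply (cmp_bound (uu h) (t_pdf nu)).
    apply uu_cont. apply pdf_cont; auto. apply uu_bounds. apply pdf_prim_bound; auto. }
  destruct (impr (uu h) (uu_cont h) (fun t => proj1 (uu_bounds h t)) _ Hb)
    as (lm & lp & Hm & Hp & Hbd & Hg & Hs & Ha).
  unfold f1. change (fun t => t_cdf nu (t + h) ^ k * t_pdf nu t) with (uu h).
  rewrite Hg. exact Hs.
Qed.

Lemma F0 : f1 nu 0 k = 1 / (INR k + 1).
Proof.
  assert (HR : forall a b, RInt (uu 0) a b = / INR (S k) * (t_cdf nu b ^ S k - t_cdf nu a ^ S k)).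
  { intros a b. apply (is_RInt_unique (V:=R_CompleteNormedModule)).
    pose proof (is_RInt_derive (V:=R_CompleteNormedModule)
      (fun t => / INR (S k) * t_cdf nu t ^ S k) (uu 0) a b) as HI.
    replace (/ INR (S k) * (t_cdf nu b ^ S k - t_cdf nu a ^ S k)) with
      (minus (/ INR (S k) * t_cdf nu b ^ S k) (/ INR (S k) * t_cdf nu a ^ S k)).
    apply HI.
    - intros x _. eapply is_derive_val. apply is_derive_scal. apply (is_derive_pow (t_cdf nu) (S k)). apply (cdf_deriv nu Hnu).
      unfold uu. rewrite Rplus_0_r. simpl pred. apply eqR. field. rewrite S_INR. pose proof (pos_INR k). lra.
    - intros; apply uu_cont.
    - unfold minus, plus, opp; simpl. ring. }
  apply (limp_unique (fun x => RInt (uu 0) (- x) x)). apply FL.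
  apply (limp_ext (fun x => / INR (S k) * (t_cdf nu x ^ S k - t_cdf nu (- x) ^ S k))).
  { intros; rewrite HR; auto. }
  replace (1 / (INR k + 1)) with (/ INR (S k) * (1 ^ S k - 0 ^ S k)).
  2:{ rewrite S_INR, pow1. simpl. field. pose proof (pos_INR k); lra. }
  apply limp_scal. apply limp_minus.
  - apply limp_pow01. apply cdf_01; auto. lra. apply cdf_limp; auto.
  - apply (limp_pow01 (fun x => t_cdf nu (- x))). intros; apply cdf_01; auto. lra.
    apply limm_neg. apply cdf_limm; auto.
Qed.

Lemma Fmono h h' : h < h' -> f1 nu h k < f1 nu h' k.
Proof.
  intros Hh.
  set (w := fun t => uu h' t - uu h t).
  assert (Hwc : forall t, continuous w t) by (intros; apply cont_minus; apply uu_cont).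
  assert (Hwp : forall t, 0 < w t).
  { intros t. unfold w, uu.
    assert (t_cdf nu (t + h) ^ k < t_cdf nu (t + h') ^ k).
    { apply pow_lt_mono; auto. split. apply cdf_01; auto. apply cdf_lt; auto. lra. }
    pose proof (pdf_pos nu Hnu t).
    replace (t_cdf nu (t + h') ^ k * t_pdf nu t - t_cdf nu (t + h) ^ k * t_pdf nu t) with
      ((t_cdf nu (t + h') ^ k - t_cdf nu (t + h) ^ k) * t_pdf nu t) by ring.
    apply Rmult_lt_0_compat; lra. }
  assert (HE : forall a b, RInt w a b = RInt (uu h') a b - RInt (uu h) a b).
  { intros. apply (RInt_minus (V:=R_CompleteNormedModule)); apply ex_u; apply uu_cont. }
  assert (Hd : 0 < RInt w (-1) 1).
  { apply RInt_gt_0. lra. auto. auto. }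
  assert (Hw0 : forall t, 0 <= w t) by (intros; left; auto).
  assert (0 < f1 nu h' k - f1 nu h k); [|lra].
  eapply Rlt_le_trans. exact Hd.
  apply (limp_le (fun _ => RInt w (-1) 1) (fun x => RInt w (- x) x)).
  - exists 1. intros x Hx.
    rewrite (RInt_diff w (-1) 1 (ex_u w Hwc)), (RInt_diff w (- x) x (ex_u w Hwc)).
    pose proof (prim_incr w Hwc Hw0 (- x) (-1) ltac:(lra)).
    pose proof (prim_incr w Hwc Hw0 1 x ltac:(lra)). lra.
  - apply limp_const.
  - apply (limp_ext (fun x => RInt (uu h') (- x) x - RInt (uu h) (- x) x)).
    intros; rewrite HE; auto. apply limp_minus; apply FL.
Qed.

Lemma Flip h h' : Rabs (f1 nu h k - f1 nu h' k) <= INR k * / t_const nu * Rabs (h - h').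
Proof.
  set (c := INR k * / t_const nu * Rabs (h - h')).
  set (w := fun t => uu h t - uu h' t).
  assert (Hc0 : 0 <= c).
  { unfold c. pose proof (pos_INR k). pose proof (Rinv_0_lt_compat _ (C_pos nu Hnu)).
    pose proof (Rabs_pos (h - h')). apply Rmult_le_pos; [apply Rmult_le_pos|]; lra. }
  assert (Hpt : forall t, Rabs (w t) <= c * t_pdf nu t).
  { intros t. unfold w, uu.
    replace (t_cdf nu (t + h) ^ k * t_pdf nu t - t_cdf nu (t + h') ^ k * t_pdf nu t)
      with ((t_cdf nu (t + h) ^ k - t_cdf nu (t + h') ^ k) * t_pdf nu t) by ring.
    rewrite Rabs_mult. pose proof (pdf_pos nu Hnu t). rewrite (Rabs_pos_eq (t_pdf nu t)) by lra.
    apply Rmult_le_compat_r. lra.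
    eapply Rle_trans. apply pow_lip; apply cdf_01; auto.
    pose proof (cdf_lip nu Hnu (t + h) (t + h')).
    replace (t + h - (t + h')) with (h - h') in H0 by ring.
    unfold c. pose proof (pos_INR k). rewrite Rmult_assoc. apply Rmult_le_compat_l; lra. }
  assert (HE : forall a b, RInt w a b = RInt (uu h) a b - RInt (uu h') a b).
  { intros. apply (RInt_minus (V:=R_CompleteNormedModule)); apply ex_u; apply uu_cont. }
  assert (Hwc : forall t, continuous w t) by (intros; apply cont_minus; apply uu_cont).
  assert (HS : forall a b, RInt (fun t => c * t_pdf nu t) a b = c * RInt (t_pdf nu) a b).
  { intros. apply (RInt_scal (V:=R_CompleteNormedModule)). apply ex_pdf; auto. }
  assert (Hcg : forall t, continuous (fun t => c * t_pdf nu t) t).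
  { intros. apply cont_mult. apply continuous_const. apply pdf_cont; auto. }
  assert (Hbd : forall x, 0 < x -> Rabs (RInt w (- x) x) <= c).
  { intros x Hx.
    assert (Hg1 : RInt (t_pdf nu) (- x) x <= 1).
    { rewrite <- cdf_diff; auto. pose proof (cdf_01 nu Hnu x). pose proof (cdf_01 nu Hnu (- x)). lra. }
    assert (Hg0 : 0 <= RInt (t_pdf nu) (- x) x).
    { apply RInt_ge_0. lra. apply ex_pdf; auto. intros; left; apply pdf_pos; auto. }
    apply Rabs_le. split.
    - assert (RInt (fun t => - (c * t_pdf nu t)) (- x) x <= RInt w (- x) x).
      { apply RInt_le. lra. apply ex_u. intros; apply (continuous_opp (K:=R_AbsRing) (V:=R_NormedModule) (fun t => c * t_pdf nu t)); auto.
        apply ex_u; auto. intros t _. specialize (Hpt t). apply Rabs_le_between in Hpt. lra. }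
      assert (RInt (fun t => - (c * t_pdf nu t)) (- x) x = - (c * RInt (t_pdf nu) (- x) x)).
      { rewrite <- HS. apply (RInt_opp (V:=R_CompleteNormedModule)). apply ex_u; auto. }
      assert (c * RInt (t_pdf nu) (- x) x <= c * 1) by (apply Rmult_le_compat_l; lra).
      lra.
    - assert (RInt w (- x) x <= RInt (fun t => c * t_pdf nu t) (- x) x).
      { apply RInt_le. lra. apply ex_u; auto. apply ex_u; auto.
        intros t _. specialize (Hpt t). apply Rabs_le_between in Hpt. lra. }
      rewrite HS in H.
      assert (c * RInt (t_pdf nu) (- x) x <= c * 1) by (apply Rmult_le_compat_l; lra).
      lra. }
  assert (Hlim : limp (fun x => RInt w (- x) x) (f1 nu h k - f1 nu h' k)).
  { apply (limp_ext (fun x => RInt (uu h) (- x) x - RInt (uu h') (- x) x)).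
    intros; rewrite HE; auto. apply limp_minus; apply FL. }
  apply Rabs_le. split.
  - apply (limp_le (fun _ => - c) (fun x => RInt w (- x) x)); auto.
    exists 0. intros x Hx. specialize (Hbd x Hx). apply Rabs_le_between in Hbd. lra.
    apply limp_const.
  - apply (limp_le (fun x => RInt w (- x) x) (fun _ => c)); auto.
    exists 0. intros x Hx. specialize (Hbd x Hx). apply Rabs_le_between in Hbd. lra.
    apply limp_const.
Qed.

End F.

Lemma Fbig nu (Hnu : (1 <= nu)%nat) k (Hk : (1 <= k)%nat) p : 0 < p < 1 ->
  exists H, 0 < H /\ p < f1 nu H k.
Proof.
  intros Hp.
  set (e := (1 - p) / 2). set (q := 1 - e).
  assert (He : 0 < e) by (unfold e; lra).
  destruct (cdf_limm nu Hnu e He) as [M HM].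
  set (A := Rabs M + 1).
  assert (HA : - A < M) by (unfold A; pose proof (Rle_abs (- M)) as X; rewrite Rabs_Ropp in X; lra).
  assert (HA0 : 0 < A) by (unfold A; pose proof (Rabs_pos M); lra).
  specialize (HM (- A) HA). rewrite Rminus_0_r in HM. apply Rabs_def2 in HM.
  destruct (limp_pow01 (t_cdf nu) 1 k (cdf_01 nu Hnu) ltac:(lra) (cdf_limp nu Hnu) e He) as [y0 Hy0].
  rewrite pow1 in Hy0.
  set (H := Rabs y0 + A + 1).
  assert (Hy : y0 < H - A) by (unfold H; pose proof (Rle_abs y0); lra).
  specialize (Hy0 (H - A) Hy). apply Rabs_def2 in Hy0.
  assert (HH0 : 0 < H) by (unfold H; pose proof (Rabs_pos y0); lra).
  exists H. split; auto.
  assert (Hpt : forall t, - A <= t -> q * t_pdf nu t <= uu nu k H t).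
  { intros t Ht. unfold uu. apply Rmult_le_compat_r. left; apply pdf_pos; auto.
    assert (t_cdf nu (H - A) ^ k <= t_cdf nu (t + H) ^ k).
    { apply pow_incr. split. apply cdf_01; auto. apply cdf_le; auto. lra. }
    unfold q. lra. }
  assert (Hq : 0 < q) by (unfold q, e; lra).
  assert (Hlow : q * (1 - t_cdf nu (- A)) <= f1 nu H k).
  { apply (limp_le (fun x => q * (t_cdf nu x - t_cdf nu (- A))) (fun x => RInt (uu nu k H) (- x) x)).
    - exists A. intros x Hx.
      assert (Hc := uu_cont nu Hnu k H).
      assert (Hb : forall t, 0 <= uu nu k H t) by (intros; apply uu_bounds; auto).
      rewrite cdf_diff by auto.
      assert (RInt (fun t => q * t_pdf nu t) (- A) x = q * RInt (t_pdf nu) (- A) x).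
      { apply (RInt_scal (V:=R_CompleteNormedModule)). apply ex_pdf; auto. }
      assert (RInt (fun t => q * t_pdf nu t) (- A) x <= RInt (uu nu k H) (- A) x).
      { apply RInt_le. lra. apply ex_u. intros; apply cont_mult. apply continuous_const. apply pdf_cont; auto.
        apply ex_u; auto. intros t Ht. apply Hpt. lra. }
      rewrite (RInt_diff _ (- A) x (ex_u _ Hc)) in H1.
      rewrite (RInt_diff _ (- x) x (ex_u _ Hc)).
      pose proof (prim_incr _ Hc Hb (- x) (- A) ltac:(lra)). lra.
    - apply limp_scal. apply limp_minus. apply cdf_limp; auto. apply limp_const.
    - apply FL; auto. }
  assert (q * q <= q * (1 - t_cdf nu (- A))) by (apply Rmult_le_compat_l; unfold q in *; lra).
  assert (q * q - p = e * e) by (unfold q, e; field).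
  assert (0 < e * e) by (apply Rmult_lt_0_compat; lra).
  lra.
Qed.

Theorem lemma3 (nu : nat) (p : R) :
  (1 <= nu)%nat -> 0 < p < 1 ->
  exists K : R, 0 < K /\
    forall k : nat, K < INR k ->
      exists! h : R, 0 < h /\ f1 nu h k = p.
Proof.
  intros Hnu Hp. exists (1 / p). split. apply Rdiv_lt_0_compat; lra.
  intros k Hk.
  assert (Hk1 : (1 <= k)%nat).
  { destruct k. simpl in Hk. assert (0 < 1 / p) by (apply Rdiv_lt_0_compat; lra). lra. lia. }
  assert (Hpk : 1 < p * INR k).
  { replace 1 with (p * (1 / p)) by (field; lra). apply Rmult_lt_compat_l; lra. }
  assert (HF0 : f1 nu 0 k < p).
  { rewrite F0 by auto. pose proof (pos_INR k).
    apply (Rmult_lt_reg_r (INR k + 1)). lra.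
    replace (1 / (INR k + 1) * (INR k + 1)) with 1 by (field; lra). lra. }
  destruct (Fbig nu Hnu k Hk1 p Hp) as [H [HH HpH]].
  set (L := INR k * / t_const nu).
  assert (HL : 0 <= L).
  { unfold L. pose proof (pos_INR k). pose proof (Rinv_0_lt_compat _ (C_pos nu Hnu)).
    apply Rmult_le_pos; lra. }
  assert (Hcont : continuity (fun h => f1 nu h k - p)).
  { intros x eps Heps. exists (eps / (L + 1)). split.
    apply Rdiv_lt_0_compat; lra.
    intros y [_ Hy]. simpl in *. unfold R_dist in *.
    replace (f1 nu y k - p - (f1 nu x k - p)) with (f1 nu y k - f1 nu x k) by ring.
    eapply Rle_lt_trans. apply Flip; auto. fold L.
    pose proof (Rabs_pos (y - x)).
    apply Rle_lt_trans with ((L + 1) * Rabs (y - x)).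
    apply Rmult_le_compat_r; lra.
    replace eps with ((L + 1) * (eps / (L + 1))) by (field; lra).
    apply Rmult_lt_compat_l; lra. }
  destruct (IVT _ 0 H Hcont HH ltac:(lra) ltac:(lra)) as [z [Hz Hfz]].
  exists z. split.
  - split; [|lra]. destruct (Req_dec z 0) as [E|E].
    + subst z. lra.
    + lra.
  - intros y [Hy0 Hy]. destruct (Rtotal_order z y) as [Hlt|[Heq|Hgt]]; auto.
    + pose proof (Fmono nu Hnu k Hk1 z y Hlt). lra.
    + pose proof (Fmono nu Hnu k Hk1 y z Hgt). lra.
Qed.
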